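(* Let $\mathcal U$ be an ultrafilter on a set $I$ and let $(M_i)_{i\in I}$ be a family of pointed metric spaces. Then $\mathcal F((M_i)_{\mathcal U})$ is linearly isometric to the closed linear span of $\{(\delta(x_i))_{\mathcal U}:(x_i)_{\mathcal U}\in (M_i)_{\mathcal U}\}$ in the Banach space ultraproduct $(\mathcal F(M_i))_{\mathcal U}$.
   Context: Ultraproduct of metric spaces: given a set $I$, an ultrafilter $\mathcal U$ on $I$ and metric spaces $(M_i,d_i)$ with distinguished points $0_i\in M_i$, let $\ell_\infty(M_i)=\{(x_i)_{i\in I}\in\prod_i M_i:\sup_i d_i(x_i,0_i)<\infty\}$ with pseudometric $d((x_i),(y_i))=\lim_{\mathcal U,i}d_i(x_i,y_i)$. The ultraproduct $(M_i)_{\mathcal U}$ is the metric quotient identifying points at distance $0$; classes written $(x_i)_{\mathcal U}$, base point $(0_i)_{\mathcal U}$. For Banach spaces (base point $0$) this is the usual Banach ultraproduct with norm $\|(x_i)_{\mathcal U}\|=\lim_{\mathcal U}\|x_i\|$. For a pointed metric space $M$, $\mathrm{Lip}_0(M)$ is the Banach space of real Lipschitz functions vanishing at the base point normed by the Lipschitz constant, $\delta(x)\in \mathrm{Lip}_0(M)^*$ is evaluation at $x$, and $\mathcal F(M)=\overline{\mathrm{span}}\{\delta(x):x\in M\}\subset\mathrm{Lip}_0(M)^*$ is the Lipschitz-free space. *)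

(* Defs.v *)
From Stdlib Require Import Reals Lra ClassicalEpsilon List.
Open Scope R_scope.

Record ultrafilter (I : Type) := {
  uf :> (I -> Prop) -> Prop;
  uf_full : uf (fun _ => True);
  uf_proper : ~ uf (fun _ => False);
  uf_mono : forall A B : I -> Prop, (forall i, A i -> B i) -> uf A -> uf B;
  uf_inter : forall A B : I -> Prop, uf A -> uf B -> uf (fun i => A i /\ B i);
  uf_ultra : forall A : I -> Prop, uf A \/ uf (fun i => ~ A i)
}.

Definition ulim {I} (U : ultrafilter I) (a : I -> R) (l : R) : Prop :=
  forall eps, 0 < eps -> U (fun i => Rabs (a i - l) < eps).

(* the (unique, for bounded a) U-limit, chosen classically *)
Definition ulimit {I} (U : ultrafilter I) (a : I -> R) : R :=
  epsilon (inhabits 0) (ulim U a).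

Record pointed_space := PSpace {
  pcar :> Type;
  pdist : pcar -> pcar -> R;
  pbase : pcar
}.

Record pmetric := PMetric {
  pm_space :> pointed_space;
  pm_nonneg : forall x y : pm_space, 0 <= pdist pm_space x y;
  pm_sep : forall x y : pm_space, pdist pm_space x y = 0 <-> x = y;
  pm_sym : forall x y : pm_space, pdist pm_space x y = pdist pm_space y x;
  pm_tri : forall x y z : pm_space,
      pdist pm_space x z <= pdist pm_space x y + pdist pm_space y z
}.

Section Ultraproduct.
Context {I : Type} (U : ultrafilter I) (M : I -> pmetric).

Definition ufam := forall i, pcar (M i).

Definition ubounded (x : ufam) : Prop :=
  exists C, forall i, pdist (M i) (x i) (pbase (M i)) <= C.

Definition udist (x y : ufam) : R := ulimit U (fun i => pdist (M i) (x i) (y i)).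

Definition basefam : ufam := fun i => pbase (M i).

Lemma basefam_bounded : ubounded basefam.
Proof.
  exists 0; intro i; unfold basefam.
  rewrite (proj2 (pm_sep (M i) _ _) eq_refl); lra.
Qed.

Definition uclass (x : ufam) : ufam -> Prop := fun y => ubounded y /\ udist x y = 0.

(* the carrier of the ultraproduct: the classes (x_i)_U *)
Definition ucar := {P : ufam -> Prop | exists x, ubounded x /\ P = uclass x}.

Definition urep (P : ucar) : ufam :=
  epsilon (inhabits basefam) (fun x => ubounded x /\ proj1_sig P = uclass x).

Definition ultraproduct : pointed_space :=
  {| pcar := ucar;
     pdist := fun P Q => udist (urep P) (urep Q);
     pbase := exist _ (uclass basefam) (ex_intro _ basefam (conj basefam_bounded eq_refl)) |}.

End Ultraproduct.

Section Free.
Context (M : pointed_space).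

Definition lip0 (f : M -> R) : Prop :=
  f (pbase M) = 0 /\ exists L, forall x y, Rabs (f x - f y) <= L * pdist M x y.

Definition lip_ball (f : M -> R) : Prop :=
  f (pbase M) = 0 /\ forall x y, Rabs (f x - f y) <= pdist M x y.

(* functionals on Lip_0(M) (values off Lip_0(M) are irrelevant) *)
Definition functional := (M -> R) -> R.

Definition lin_on_lip0 (phi : functional) : Prop :=
  forall f g a b, lip0 f -> lip0 g ->
    phi (fun x => a * f x + b * g x) = a * phi f + b * phi g.

Definition fnorm (phi : functional) : R :=
  epsilon (inhabits 0)
    (is_lub (fun t => exists f, lip_ball f /\ t = Rabs (phi f))).

Definition delta (x : M) : functional := fun f => f x.

Definition molecule (l : list (R * M)) : functional :=
  fun f => fold_right (fun p acc => fst p * f (snd p) + acc) 0 l.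

(* F(M) = closed linear span of delta(M) in Lip_0(M)^* *)
Definition in_free (phi : functional) : Prop :=
  lin_on_lip0 phi /\
  (exists C, forall f, lip_ball f -> Rabs (phi f) <= C) /\
  forall eps, 0 < eps -> exists l : list (R * M),
    forall f, lip_ball f -> Rabs (phi f - molecule l f) <= eps.

End Free.

Section BanachUltra.
Context {I : Type} (U : ultrafilter I) (M : I -> pmetric).

Definition ffam := forall i, functional (M i).

(* representatives of elements of (F(M_i))_U *)
Definition in_free_ultra (nu : ffam) : Prop :=
  (forall i, in_free (M i) (nu i)) /\ exists C, forall i, fnorm (M i) (nu i) <= C.

Definition unorm (nu : ffam) : R := ulimit U (fun i => fnorm (M i) (nu i)).

Definition delta_comb (l : list (R * ufam M)) : ffam :=
  fun i => molecule (M i) (map (fun p => (fst p, snd p i)) l).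

Definition ffam_sub (nu mu : ffam) : ffam := fun i f => nu i f - mu i f.

Definition in_delta_span_closure (nu : ffam) : Prop :=
  in_free_ultra nu /\
  forall eps, 0 < eps -> exists l : list (R * ufam M),
    Forall (fun p => ubounded M (snd p)) l /\
    unorm (ffam_sub nu (delta_comb l)) <= eps.

End BanachUltra.

(* Main.v *)
Require Import Defs.
From Stdlib Require Import Reals.
From Stdlib Require Import Lra Lia ZArith ClassicalEpsilon Classical FunctionalExtensionality List.
Open Scope R_scope.


Lemma Rabs_le_inv x c : Rabs x <= c -> -c <= x /\ x <= c.
Proof. unfold Rabs; destruct (Rcase_abs x); intro; split; lra. Qed.

Lemma Rabs_lt_inv x c : Rabs x < c -> -c < x /\ x < c.
Proof. unfold Rabs; destruct (Rcase_abs x); intro; split; lra. Qed.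

Lemma Rabs_le_intro x c : -c <= x -> x <= c -> Rabs x <= c.
Proof. unfold Rabs; destruct (Rcase_abs x); intros; lra. Qed.

Lemma Rabs_lt_intro x c : -c < x -> x < c -> Rabs x < c.
Proof. unfold Rabs; destruct (Rcase_abs x); intros; lra. Qed.

Lemma Rabs_ge x : x <= Rabs x /\ -x <= Rabs x.
Proof. unfold Rabs; destruct (Rcase_abs x); split; lra. Qed.

Section UF.
Context {I : Type} (U : ultrafilter I).

Lemma uf_nonempty (A : I -> Prop) : U A -> exists i, A i.
Proof.
  intro H. apply NNPP. intro Hn. apply (uf_proper _ U).
  apply (uf_mono _ U A). intros i Ai. apply Hn. now exists i. exact H.
Qed.

Lemma uf_and (A B : I -> Prop) : U A -> U B -> U (fun i => A i /\ B i).
Proof. apply uf_inter. Qed.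

Lemma uf_imp (A B : I -> Prop) : U A -> (forall i, A i -> B i) -> U B.
Proof. intros H1 H2. exact (uf_mono _ U A B H2 H1). Qed.

Lemma uf_all (P : I -> Prop) : (forall i, P i) -> U P.
Proof. intro H. apply (uf_imp (fun _ => True)). apply uf_full. auto. Qed.

Lemma uf_list {X} (l : list X) (P : X -> I -> Prop) :
  (forall x, In x l -> U (P x)) -> U (fun i => forall x, In x l -> P x i).
Proof.
  induction l as [|a l IH]; intro H.
  - apply uf_all. intros i x [].
  - apply (uf_imp (fun i => P a i /\ (forall x, In x l -> P x i))).
    + apply uf_and. apply H; now left. apply IH. intros; apply H; now right.
    + intros i [H1 H2] x [<-|Hx]; auto.
Qed.

Lemma uf_nat (n : nat) (P : nat -> I -> Prop) :
  (forall k, (k <= n)%nat -> U (P k)) -> U (fun i => forall k, (k <= n)%nat -> P k i).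
Proof.
  induction n as [|n IH]; intro H.
  - apply (uf_imp (P 0%nat)). apply H; lia.
    intros i Hi k Hk. replace k with 0%nat by lia. exact Hi.
  - apply (uf_imp (fun i => P (S n) i /\ forall k, (k <= n)%nat -> P k i)).
    + apply uf_and. apply H; lia. apply IH. intros; apply H; lia.
    + intros i [H1 H2] k Hk. destruct (Nat.eq_dec k (S n)) as [->|]; auto. apply H2; lia.
Qed.

Lemma ulim_unique a l1 l2 : ulim U a l1 -> ulim U a l2 -> l1 = l2.
Proof.
  intros H1 H2. apply NNPP; intro Hne.
  assert (He : 0 < Rabs (l1 - l2) / 2).
  { apply Rdiv_lt_0_compat; [|lra]. apply Rabs_pos_lt. lra. }
  destruct (uf_nonempty _ (uf_and _ _ (H1 _ He) (H2 _ He))) as [i [A B]].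
  assert (Rabs (l1 - l2) <= Rabs (a i - l1) + Rabs (a i - l2)).
  { replace (l1 - l2) with (-(a i - l1) + (a i - l2)) by ring.
    eapply Rle_trans. apply Rabs_triang. rewrite Rabs_Ropp. lra. }
  lra.
Qed.

Lemma ulim_exists a : (exists C, forall i, Rabs (a i) <= C) -> exists l, ulim U a l.
Proof.
  intros [C HC].
  set (E := fun s => U (fun i => a i <= - s)).
  assert (HEb : bound E).
  { exists C. intros s Hs. unfold E in Hs. apply Rnot_lt_le. intro Hlt.
    destruct (uf_nonempty _ Hs) as [i Hi]. specialize (HC i).
    apply Rabs_le_inv in HC. lra. }
  assert (HEn : exists s, E s).
  { exists (-C). unfold E. apply uf_all. intro i. specialize (HC i).
    apply Rabs_le_inv in HC. lra. }
  destruct (completeness E HEb HEn) as [l' [Hub Hlub]].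
  exists (- l'). intros eps Heps.
  assert (A1 : U (fun i => a i < - l' + eps)).
  { apply NNPP. intro Hn.
    assert (Hup : is_upper_bound E (l' - eps)).
    { intros s Hs. apply Rnot_lt_le. intro Hlt. apply Hn.
      apply (uf_imp _ _ Hs). intros i Hi. lra. }
    specialize (Hlub _ Hup). lra. }
  assert (A2 : U (fun i => - l' - eps < a i)).
  { destruct (uf_ultra _ U (fun i => a i <= - (l' + eps/2))) as [H|H].
    - specialize (Hub (l' + eps/2) H). lra.
    - apply (uf_imp _ _ H). intros i Hi. lra. }
  apply (uf_imp _ _ (uf_and _ _ A1 A2)). intros i [B1 B2].
  apply Rabs_lt_intro; lra.
Qed.

Lemma ulimit_eq a l : ulim U a l -> ulimit U a = l.
Proof.
  intro H. unfold ulimit. apply (ulim_unique a).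
  apply epsilon_spec. now exists l. exact H.
Qed.

Lemma ulimit_spec a : (exists C, forall i, Rabs (a i) <= C) -> ulim U a (ulimit U a).
Proof.
  intro H. destruct (ulim_exists a H) as [l Hl]. now rewrite (ulimit_eq a l Hl).
Qed.

Lemma ulim_le_const a l c : ulim U a l -> U (fun i => a i <= c) -> l <= c.
Proof.
  intros H1 H2. apply Rnot_lt_le. intro Hlt.
  assert (He : 0 < l - c) by lra.
  destruct (uf_nonempty _ (uf_and _ _ (H1 _ He) H2)) as [i [A B]].
  apply Rabs_lt_inv in A. lra.
Qed.

Lemma ulim_ge_const a l c : ulim U a l -> U (fun i => c <= a i) -> c <= l.
Proof.
  intros H1 H2. apply Rnot_lt_le. intro Hlt.
  assert (He : 0 < c - l) by lra.
  destruct (uf_nonempty _ (uf_and _ _ (H1 _ He) H2)) as [i [A B]].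
  apply Rabs_lt_inv in A. lra.
Qed.

Lemma ulim_lt a l c : ulim U a l -> l < c -> U (fun i => a i < c).
Proof.
  intros H Hl. apply (uf_imp _ _ (H (c - l) ltac:(lra))). intros i Hi.
  apply Rabs_lt_inv in Hi. lra.
Qed.

Lemma ulim_gt a l c : ulim U a l -> c < l -> U (fun i => c < a i).
Proof.
  intros H Hl. apply (uf_imp _ _ (H (l - c) ltac:(lra))). intros i Hi.
  apply Rabs_lt_inv in Hi. lra.
Qed.

Lemma ulim_const c : ulim U (fun _ => c) c.
Proof. intros eps He. apply uf_all. intro. rewrite Rminus_diag, Rabs_R0. lra. Qed.

Lemma ulim_plus a b la lb : ulim U a la -> ulim U b lb -> ulim U (fun i => a i + b i) (la + lb).
Proof.
  intros Ha Hb eps He.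
  apply (uf_imp _ _ (uf_and _ _ (Ha (eps/2) ltac:(lra)) (Hb (eps/2) ltac:(lra)))).
  intros i [A B]. replace (a i + b i - (la + lb)) with ((a i - la) + (b i - lb)) by ring.
  eapply Rle_lt_trans. apply Rabs_triang. lra.
Qed.

Lemma ulim_scal c a la : ulim U a la -> ulim U (fun i => c * a i) (c * la).
Proof.
  intros Ha eps He.
  apply (uf_imp _ _ (Ha (eps / (Rabs c + 1)) ltac:(apply Rdiv_lt_0_compat; [lra|pose proof (Rabs_pos c); lra]))).
  intros i Hi. replace (c * a i - c * la) with (c * (a i - la)) by ring.
  rewrite Rabs_mult.
  assert (Rabs c * Rabs (a i - la) <= (Rabs c + 1) * Rabs (a i - la)).
  { apply Rmult_le_compat_r. apply Rabs_pos. lra. }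
  assert ((Rabs c + 1) * Rabs (a i - la) < eps).
  { pose proof (Rabs_pos c).
    apply (Rmult_lt_compat_l (Rabs c + 1)) in Hi; [|lra].
    replace ((Rabs c + 1) * (eps / (Rabs c + 1))) with eps in Hi by (field; lra). lra. }
  lra.
Qed.

Lemma ulim_squeeze a b c l : ulim U a l -> ulim U b 0 -> U (fun i => Rabs (c i - a i) <= b i) -> ulim U c l.
Proof.
  intros Ha Hb Hc eps He.
  apply (uf_imp _ _ (uf_and _ _ (uf_and _ _ (Ha (eps/2) ltac:(lra)) (Hb (eps/2) ltac:(lra))) Hc)).
  intros i [[A B] C]. rewrite Rminus_0_r in B.
  replace (c i - l) with ((c i - a i) + (a i - l)) by ring.
  eapply Rle_lt_trans. apply Rabs_triang. apply Rabs_lt_inv in B. lra.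
Qed.

Lemma ulim_zero a : (forall eps, 0 < eps -> U (fun i => Rabs (a i) <= eps)) -> ulim U a 0.
Proof.
  intros H eps He. apply (uf_imp _ _ (H (eps/2) ltac:(lra))). intros i Hi.
  rewrite Rminus_0_r. lra.
Qed.

Lemma ulim_ext_U a b l : ulim U a l -> U (fun i => a i = b i) -> ulim U b l.
Proof.
  intros Ha Hab eps He. apply (uf_imp _ _ (uf_and _ _ (Ha eps He) Hab)).
  intros i [A B]. now rewrite <- B.
Qed.

End UF.

Definition molf {X} (l : list (R * X)) (h : X -> R) : R :=
  fold_right (fun p acc => fst p * h (snd p) + acc) 0 l.
Definition wsum {X} (l : list (R * X)) (k : X -> R) : R :=
  fold_right (fun p acc => Rabs (fst p) * k (snd p) + acc) 0 l.
Definition negl {X} (l : list (R * X)) := map (fun p => (- fst p, snd p)) l.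
Definition scall {X} (c : R) (l : list (R * X)) := map (fun p => (c * fst p, snd p)) l.

Lemma molecule_molf (M : pointed_space) l f : molecule M l f = molf l f.
Proof. reflexivity. Qed.

Lemma molf_map {X Y} (e : X -> Y) (l : list (R * X)) h :
  molf (map (fun p => (fst p, e (snd p))) l) h = molf l (fun x => h (e x)).
Proof. induction l as [|p l IH]; simpl; auto. now rewrite IH. Qed.

Lemma molf_app {X} (l1 l2 : list (R * X)) h : molf (l1 ++ l2) h = molf l1 h + molf l2 h.
Proof. induction l1 as [|p l IH]; simpl. ring. rewrite IH. ring. Qed.

Lemma molf_scal {X} c (l : list (R * X)) h : molf (scall c l) h = c * molf l h.
Proof. induction l as [|p l IH]; simpl. ring. rewrite IH. ring. Qed.

Lemma molf_neg {X} (l : list (R * X)) h : molf (negl l) h = - molf l h.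
Proof. induction l as [|p l IH]; simpl. ring. rewrite IH. ring. Qed.

Lemma molf_lin {X} (l : list (R * X)) a b f g :
  molf l (fun x => a * f x + b * g x) = a * molf l f + b * molf l g.
Proof. induction l as [|p l IH]; simpl. ring. rewrite IH. ring. Qed.

Lemma molf_sub {X} (l : list (R * X)) f g :
  molf l f - molf l g = molf l (fun x => f x - g x).
Proof. induction l as [|p l IH]; simpl. ring. rewrite <- IH. ring. Qed.

Lemma molf_abs {X} (l : list (R * X)) h k :
  (forall p, In p l -> Rabs (h (snd p)) <= k (snd p)) -> Rabs (molf l h) <= wsum l k.
Proof.
  induction l as [|p l IH]; intro H; simpl.
  - rewrite Rabs_R0; lra.
  - eapply Rle_trans. apply Rabs_triang. rewrite Rabs_mult.
    apply Rplus_le_compat. apply Rmult_le_compat_l. apply Rabs_pos. apply H; now left.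
    apply IH. intros; apply H; now right.
Qed.

Lemma wsum_mono {X} (l : list (R * X)) k1 k2 :
  (forall p, In p l -> k1 (snd p) <= k2 (snd p)) -> wsum l k1 <= wsum l k2.
Proof.
  induction l as [|p l IH]; intro H; simpl. lra.
  apply Rplus_le_compat. apply Rmult_le_compat_l. apply Rabs_pos. apply H; now left.
  apply IH. intros; apply H; now right.
Qed.

Lemma wsum_const {X} (l : list (R * X)) c : wsum l (fun _ => c) = wsum l (fun _ => 1) * c.
Proof. induction l as [|p l IH]; simpl. ring. rewrite IH. ring. Qed.

Lemma wsum_nonneg {X} (l : list (R * X)) k : (forall p, In p l -> 0 <= k (snd p)) -> 0 <= wsum l k.
Proof.
  intro H. induction l as [|p l IH]; simpl. lra.
  apply Rplus_le_le_0_compat. apply Rmult_le_pos. apply Rabs_pos. apply H; now left.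
  apply IH. intros; apply H; now right.
Qed.

Lemma ulim_molf {I X} (U : ultrafilter I) (l : list (R * X)) (h : I -> X -> R) (w : X -> R) :
  (forall p, In p l -> ulim U (fun i => h i (snd p)) (w (snd p))) ->
  ulim U (fun i => molf l (h i)) (molf l w).
Proof.
  induction l as [|p l IH]; intro H; simpl.
  - apply ulim_const.
  - apply ulim_plus. apply ulim_scal. apply H; now left.
    apply IH. intros; apply H; now right.
Qed.

Lemma ulim_wsum0 {I X} (U : ultrafilter I) (l : list (R * X)) (h : I -> X -> R) :
  (forall p, In p l -> ulim U (fun i => h i (snd p)) 0) ->
  ulim U (fun i => wsum l (h i)) 0.
Proof.
  induction l as [|p l IH]; intro H; simpl.
  - apply ulim_const.
  - replace 0 with (Rabs (fst p) * 0 + 0) by ring. apply ulim_plus. apply ulim_scal. apply H; now left.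
    apply IH. intros; apply H; now right.
Qed.

Section Norms.
Context (M : pointed_space) (Hnn : forall x y : M, 0 <= pdist M x y).

Definition nb (phi : functional M) C := forall f, lip_ball M f -> Rabs (phi f) <= C.

Lemma zero_ball : lip_ball M (fun _ => 0).
Proof. split. auto. intros x y. rewrite Rminus_diag, Rabs_R0. apply Hnn. Qed.

Lemma fnorm_lub phi : (exists C, nb phi C) ->
  is_lub (fun t => exists f, lip_ball M f /\ t = Rabs (phi f)) (fnorm M phi).
Proof.
  intros [C HC]. unfold fnorm. apply epsilon_spec.
  destruct (completeness (fun t => exists f, lip_ball M f /\ t = Rabs (phi f))) as [m Hm].
  - exists C. intros t [f [Hf ->]]. now apply HC.
  - exists (Rabs (phi (fun _ => 0))). exists (fun _ => 0). split; auto. apply zero_ball.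
  - now exists m.
Qed.

Lemma fnorm_nb phi : (exists C, nb phi C) -> nb phi (fnorm M phi).
Proof. intros H f Hf. destruct (fnorm_lub phi H) as [H1 _]. apply H1. now exists f. Qed.

Lemma fnorm_le phi C : nb phi C -> fnorm M phi <= C.
Proof.
  intros H. destruct (fnorm_lub phi (ex_intro _ C H)) as [_ H2]. apply H2.
  intros t [f [Hf ->]]. now apply H.
Qed.

Lemma fnorm_pos phi : (exists C, nb phi C) -> 0 <= fnorm M phi.
Proof.
  intro H. eapply Rle_trans. apply (Rabs_pos (phi (fun _ => 0))). apply fnorm_nb; auto. apply zero_ball.
Qed.

Lemma fnorm_approx phi eps : (exists C, nb phi C) -> 0 < eps ->
  exists f, lip_ball M f /\ fnorm M phi - eps < Rabs (phi f).
Proof.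
  intros H He. apply NNPP. intro Hn.
  assert (fnorm M phi <= fnorm M phi - eps); [|lra].
  apply fnorm_le. intros f Hf. apply Rnot_lt_le. intro Hl. apply Hn. exists f; split; auto.
Qed.

Lemma lip_ball_abs f x : lip_ball M f -> Rabs (f x) <= pdist M x (pbase M).
Proof. intros [H0 H1]. specialize (H1 x (pbase M)). now rewrite H0, Rminus_0_r in H1. Qed.

Lemma mol_nb l : nb (molecule M l) (wsum l (fun x => pdist M x (pbase M))).
Proof. intros f Hf. rewrite molecule_molf. apply molf_abs. intros p _. now apply lip_ball_abs. Qed.

Lemma ball_lip0 f : lip_ball M f -> lip0 M f.
Proof. intros [H0 H1]. split; auto. exists 1. intros x y. rewrite Rmult_1_l. auto. Qed.

Lemma in_free_mol l : in_free M (molecule M l).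
Proof.
  split; [|split].
  - intros f g a b _ _. rewrite !molecule_molf. apply molf_lin.
  - eexists. apply mol_nb.
  - intros eps He. exists l. intros f _. rewrite Rminus_diag, Rabs_R0. lra.
Qed.

Lemma in_free_nb phi : in_free M phi -> exists C, nb phi C.
Proof. intros [_ [H _]]. exact H. Qed.

Lemma in_free_lin phi psi a b : in_free M phi -> in_free M psi ->
  in_free M (fun f => a * phi f + b * psi f).
Proof.
  intros [L1 [[C1 B1] A1]] [L2 [[C2 B2] A2]]. split; [|split].
  - intros f g c d Hf Hg. rewrite (L1 f g c d Hf Hg), (L2 f g c d Hf Hg). ring.
  - exists (Rabs a * C1 + Rabs b * C2). intros f Hf.
    eapply Rle_trans. apply Rabs_triang. rewrite !Rabs_mult.
    apply Rplus_le_compat; apply Rmult_le_compat_l; auto using Rabs_pos.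
  - intros eps He.
    assert (Hk : 0 < eps / (2 * (Rabs a + Rabs b + 1))).
    { apply Rdiv_lt_0_compat. lra. pose proof (Rabs_pos a); pose proof (Rabs_pos b); lra. }
    destruct (A1 _ Hk) as [l1 Hl1]. destruct (A2 _ Hk) as [l2 Hl2].
    exists (scall a l1 ++ scall b l2). intros f Hf.
    rewrite molecule_molf, molf_app, !molf_scal, <- !molecule_molf.
    specialize (Hl1 f Hf). specialize (Hl2 f Hf).
    set (k := eps / (2 * (Rabs a + Rabs b + 1))) in *.
    replace (a * phi f + b * psi f - (a * molecule M l1 f + b * molecule M l2 f))
      with (a * (phi f - molecule M l1 f) + b * (psi f - molecule M l2 f)) by ring.
    eapply Rle_trans. apply Rabs_triang. rewrite !Rabs_mult.
    assert (Rabs a * Rabs (phi f - molecule M l1 f) <= Rabs a * k) by (apply Rmult_le_compat_l; auto using Rabs_pos).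
    assert (Rabs b * Rabs (psi f - molecule M l2 f) <= Rabs b * k) by (apply Rmult_le_compat_l; auto using Rabs_pos).
    assert ((Rabs a + Rabs b) * k <= eps).
    { unfold k. pose proof (Rabs_pos a); pose proof (Rabs_pos b).
      apply (Rmult_le_reg_r (2 * (Rabs a + Rabs b + 1))). lra.
      field_simplify; try lra. nra. }
    nra.
Qed.

Lemma lip0_scale f : lip0 M f -> exists K g, 0 < K /\ lip_ball M g /\ f = (fun x => K * g x + 0 * g x).
Proof.
  intros [H0 [L HL]]. exists (Rabs L + 1), (fun x => f x / (Rabs L + 1)).
  pose proof (Rabs_pos L). split; [lra|split].
  - split. rewrite H0. unfold Rdiv; ring.
    intros x y. replace (f x / (Rabs L + 1) - f y / (Rabs L + 1)) with ((f x - f y) / (Rabs L + 1)) by (field; lra).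
    unfold Rdiv. rewrite Rabs_mult, Rabs_inv, (Rabs_pos_eq (Rabs L + 1)) by lra.
    apply (Rmult_le_reg_r (Rabs L + 1)). lra.
    rewrite Rmult_assoc, Rinv_l by lra. rewrite Rmult_1_r.
    eapply Rle_trans. apply HL. pose proof (Hnn x y). pose proof (Rle_abs L). nra.
  - apply functional_extensionality. intro x. field. lra.
Qed.

Lemma lin_scale phi f K g : lin_on_lip0 M phi -> lip_ball M g -> f = (fun x => K * g x + 0 * g x) ->
  phi f = K * phi g.
Proof. intros HL Hg ->. rewrite HL by (apply ball_lip0; auto). ring. Qed.

Definition seqlim (a : nat -> R) : R := epsilon (inhabits 0) (Un_cv a).

Lemma seqlim_spec a l : Un_cv a l -> seqlim a = l.
Proof. intro H. apply (UL_sequence a). unfold seqlim. apply epsilon_spec. now exists l. exact H. Qed.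

Lemma cv_scal a l K : Un_cv a l -> Un_cv (fun n => K * a n) (K * l).
Proof.
  intros H eps He. destruct (H (eps / (Rabs K + 1))) as [N HN].
  apply Rdiv_lt_0_compat; [lra|pose proof (Rabs_pos K); lra].
  exists N. intros n Hn. specialize (HN n Hn). unfold Rdist in *.
  replace (K * a n - K * l) with (K * (a n - l)) by ring. rewrite Rabs_mult.
  pose proof (Rabs_pos K). pose proof (Rabs_pos (a n - l)).
  apply (Rmult_lt_compat_l (Rabs K + 1)) in HN; [|lra].
  replace ((Rabs K + 1) * (eps / (Rabs K + 1))) with eps in HN by (field; lra). nra.
Qed.

Lemma cv_le a l x c m : Un_cv a l -> (forall n, (m <= n)%nat -> Rabs (a n - x) <= c) -> Rabs (l - x) <= c.
Proof.
  intros H Hb. apply Rnot_lt_le. intro Hl.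
  destruct (H (Rabs (l - x) - c)) as [N HN]. lra.
  specialize (HN (max N m) ltac:(lia)). specialize (Hb (max N m) ltac:(lia)).
  unfold Rdist in HN. pose proof (Rabs_triang (a (max N m) - x) (l - a (max N m))).
  replace (a (max N m) - x + (l - a (max N m))) with (l - x) in H0 by ring.
  rewrite <- Rabs_Ropp in HN. replace (- (a (max N m) - l)) with (l - a (max N m)) in HN by ring.
  lra.
Qed.

Lemma complete_free (psi : nat -> functional M) (c : nat -> R) :
  (forall n, in_free M (psi n)) ->
  (forall eps, 0 < eps -> exists m, c m < eps) ->
  (forall m n, (m <= n)%nat -> forall f, lip_ball M f -> Rabs (psi n f - psi m f) <= c m) ->
  in_free M (fun f => seqlim (fun n => psi n f)) /\
  (forall m f, lip_ball M f -> Rabs (seqlim (fun n => psi n f) - psi m f) <= c m).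
Proof.
  intros Hf Hc Hcau.
  assert (Cb : forall f, lip_ball M f -> Un_cv (fun n => psi n f) (seqlim (fun n => psi n f))).
  { intros f Hb. destruct (R_complete (fun n => psi n f)) as [l Hl].
    - intros eps He. destruct (Hc (eps/2) ltac:(lra)) as [m Hm]. exists m.
      intros n k Hn Hk. unfold Rdist.
      pose proof (Hcau m n Hn f Hb). pose proof (Hcau m k Hk f Hb).
      replace (psi n f - psi k f) with ((psi n f - psi m f) - (psi k f - psi m f)) by ring.
      eapply Rle_lt_trans. apply Rabs_triang. rewrite Rabs_Ropp. lra.
    - now rewrite (seqlim_spec _ l Hl). }
  assert (C0 : forall f, lip0 M f -> Un_cv (fun n => psi n f) (seqlim (fun n => psi n f))).
  { intros f H0. destruct (lip0_scale f H0) as [K [g [HK [Hg Hfg]]]].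
    assert (E : (fun n => psi n f) = (fun n => K * psi n g)).
    { apply functional_extensionality. intro n. apply lin_scale; auto. apply (Hf n). }
    rewrite E. pose proof (cv_scal _ _ K (Cb g Hg)).
    rewrite (seqlim_spec _ _ H). exact H. }
  assert (Hbd : forall m f, lip_ball M f -> Rabs (seqlim (fun n => psi n f) - psi m f) <= c m).
  { intros m f Hb. apply (cv_le _ _ _ _ m (Cb f Hb)). intros n Hn. now apply Hcau. }
  split; [|exact Hbd]. split; [|split].
  - intros f g a b Hf0 Hg0.
    apply seqlim_spec.
    assert (E : (fun n => psi n (fun x => a * f x + b * g x)) = (fun n => a * psi n f + b * psi n g)).
    { apply functional_extensionality. intro n. destruct (Hf n) as [L _]. now apply L. }
    rewrite E. apply CV_plus; apply cv_scal; auto.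
  - destruct (in_free_nb _ (Hf 0%nat)) as [C HC]. exists (C + c 0%nat). intros f Hb.
    specialize (Hbd 0%nat f Hb). specialize (HC f Hb).
    pose proof (Rabs_triang (seqlim (fun n => psi n f) - psi 0%nat f) (psi 0%nat f)).
    replace (seqlim (fun n => psi n f) - psi 0%nat f + psi 0%nat f) with (seqlim (fun n => psi n f)) in H by ring.
    lra.
  - intros eps He. destruct (Hc (eps/2) ltac:(lra)) as [m Hm].
    destruct (Hf m) as [_ [_ A]]. destruct (A (eps/2) ltac:(lra)) as [l Hl]. exists l.
    intros f Hb. specialize (Hl f Hb). specialize (Hbd m f Hb).
    replace (seqlim (fun n => psi n f) - molecule M l f) with
      ((seqlim (fun n => psi n f) - psi m f) + (psi m f - molecule M l f)) by ring.
    eapply Rle_trans. apply Rabs_triang. lra.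
Qed.

End Norms.

Lemma Rmin_lip a1 a2 b1 b2 c : Rabs (a1 - b1) <= c -> Rabs (a2 - b2) <= c -> Rabs (Rmin a1 a2 - Rmin b1 b2) <= c.
Proof.
  intros H1 H2. apply Rabs_le_inv in H1. apply Rabs_le_inv in H2.
  unfold Rmin; destruct (Rle_dec a1 a2); destruct (Rle_dec b1 b2); apply Rabs_le_intro; lra.
Qed.

Section McShane.
Context (M : pointed_space)
  (Hsym : forall x y : M, pdist M x y = pdist M y x)
  (Htri : forall x y z : M, pdist M x z <= pdist M x y + pdist M y z)
  (Hrefl : forall x : M, pdist M x x = 0).

Definition mcs {X} (e : X -> M) (v : X -> R) (pts : list X) (y : M) : R :=
  fold_right (fun x acc => Rmin (v x + pdist M (e x) y) acc) (pdist M (pbase M) y) pts.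

Lemma mcs_lip {X} (e : X -> M) v pts y z : Rabs (mcs e v pts y - mcs e v pts z) <= pdist M y z.
Proof.
  induction pts as [|x pts IH]; simpl.
  - pose proof (Htri (pbase M) z y). rewrite (Hsym z y) in H.
    pose proof (Htri (pbase M) y z). apply Rabs_le_intro; lra.
  - apply Rmin_lip; auto.
    pose proof (Htri (e x) z y). rewrite (Hsym z y) in H.
    pose proof (Htri (e x) y z). apply Rabs_le_intro; lra.
Qed.

Lemma mcs_upper {X} (e : X -> M) v pts x : In x pts -> mcs e v pts (e x) <= v x.
Proof.
  induction pts as [|x' pts IH]; simpl. tauto.
  intros [->|Hx]. rewrite Hrefl. pose proof (Rmin_l (v x + 0) (mcs e v pts (e x))). unfold mcs in *. lra.
  eapply Rle_trans. apply Rmin_r. auto.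
Qed.

Lemma mcs_base_upper {X} (e : X -> M) v pts : mcs e v pts (pbase M) <= 0.
Proof.
  induction pts as [|x' pts IH]; simpl. rewrite Hrefl; lra.
  eapply Rle_trans. apply Rmin_r. auto.
Qed.

Lemma mcs_lower {X} (e : X -> M) v pts y c :
  (forall x, In x pts -> c <= v x + pdist M (e x) y) -> c <= pdist M (pbase M) y -> c <= mcs e v pts y.
Proof.
  intros H Hb. induction pts as [|x pts IH]; simpl; auto.
  apply Rmin_glb. apply H; now left. apply IH. intros; apply H; now right.
Qed.

End McShane.

Section UProd.
Context {I : Type} (U : ultrafilter I) (M : I -> pmetric).
Notation MU := (ultraproduct U M).
Definition rep (P : MU) : ufam M := urep U M P.

Lemma rep_spec (P : MU) : ubounded M (rep P) /\ proj1_sig P = uclass U M (rep P).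
Proof.
  unfold rep, urep. apply epsilon_spec. destruct (proj2_sig P) as [x Hx]. now exists x.
Qed.

Lemma d_bounded (x y : ufam M) : ubounded M x -> ubounded M y ->
  exists C, forall i, Rabs (pdist (M i) (x i) (y i)) <= C.
Proof.
  intros [Cx Hx] [Cy Hy]. exists (Cx + Cy). intro i.
  rewrite Rabs_pos_eq by apply pm_nonneg.
  pose proof (pm_tri (M i) (x i) (pbase (M i)) (y i)). specialize (Hx i). specialize (Hy i).
  rewrite (pm_sym (M i) (pbase (M i)) (y i)) in H. lra.
Qed.

Lemma udist_lim x y : ubounded M x -> ubounded M y ->
  ulim U (fun i => pdist (M i) (x i) (y i)) (udist U M x y).
Proof. intros Hx Hy. apply ulimit_spec. now apply d_bounded. Qed.

Lemma rep_bounded P : ubounded M (rep P).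
Proof. apply rep_spec. Qed.

Lemma pdU_lim (P Q : MU) : ulim U (fun i => pdist (M i) (rep P i) (rep Q i)) (pdist MU P Q).
Proof. apply (udist_lim (rep P) (rep Q)); apply rep_bounded. Qed.

Lemma pdU_nonneg (P Q : MU) : 0 <= pdist MU P Q.
Proof. apply (ulim_ge_const U _ _ _ (pdU_lim P Q)). apply uf_all. intro; apply pm_nonneg. Qed.

Lemma pdU_sym (P Q : MU) : pdist MU P Q = pdist MU Q P.
Proof.
  apply (ulim_unique U (fun i => pdist (M i) (rep P i) (rep Q i))). apply pdU_lim.
  eapply ulim_ext_U. apply pdU_lim. apply uf_all. intro; apply pm_sym.
Qed.

Lemma pdU_tri (P Q S : MU) : pdist MU P S <= pdist MU P Q + pdist MU Q S.
Proof.
  pose proof (ulim_plus U _ _ _ _ (pdU_lim P Q) (pdU_lim Q S)).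
  apply Rminus_le. set (a := fun i => pdist (M i) (rep P i) (rep S i) - (pdist (M i) (rep P i) (rep Q i) + pdist (M i) (rep Q i) (rep S i))).
  apply (ulim_le_const U a). unfold a. apply ulim_plus. apply pdU_lim.
  apply (ulim_scal U (-1)) in H. eapply ulim_ext_U. replace (- (pdist MU P Q + pdist MU Q S)) with (-1 * (pdist MU P Q + pdist MU Q S)) by ring. exact H.
  apply uf_all; intro; ring.
  apply uf_all; intro i; unfold a. pose proof (pm_tri (M i) (rep P i) (rep Q i) (rep S i)). lra.
Qed.

Lemma pdU_refl (P : MU) : pdist MU P P = 0.
Proof.
  apply (ulim_unique U (fun i => pdist (M i) (rep P i) (rep P i))). apply pdU_lim.
  eapply ulim_ext_U. apply ulim_const. apply uf_all. intro. symmetry. apply pm_sep. auto.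
Qed.

Lemma rep_class (x : ufam M) : ubounded M x -> forall (P : MU), proj1_sig P = uclass U M x ->
  ulim U (fun i => pdist (M i) (x i) (rep P i)) 0.
Proof.
  intros Hx P HP. destruct (rep_spec P) as [Hb He].
  assert (Hin : uclass U M (rep P) (rep P)).
  { split; auto. unfold udist. apply ulimit_eq. eapply ulim_ext_U. apply ulim_const.
    apply uf_all. intro. symmetry. apply pm_sep. auto. }
  rewrite <- He, HP in Hin. destruct Hin as [_ H0].
  rewrite <- H0. now apply udist_lim.
Qed.

Lemma rep_base : ulim U (fun i => pdist (M i) (pbase (M i)) (rep (pbase MU) i)) 0.
Proof.
  apply (rep_class (basefam M)). apply basefam_bounded. reflexivity.
Qed.

Lemma pdU_base (P : MU) : ulim U (fun i => pdist (M i) (pbase (M i)) (rep P i)) (pdist MU (pbase MU) P).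
Proof.
  eapply ulim_squeeze. apply (pdU_lim (pbase MU) P). apply rep_base.
  apply uf_all. intro i.
  pose proof (pm_tri (M i) (rep (pbase MU) i) (pbase (M i)) (rep P i)).
  pose proof (pm_sym (M i) (rep (pbase MU) i) (pbase (M i))).
  pose proof (pm_tri (M i) (pbase (M i)) (rep (pbase MU) i) (rep P i)).
  apply Rabs_le_intro; lra.
Qed.

Lemma rep_bnd (P : MU) : exists C, forall i, pdist (M i) (rep P i) (pbase (M i)) <= C.
Proof. apply rep_bounded. Qed.

Definition cls (x : ufam M) : MU :=
  match excluded_middle_informative (ubounded M x) with
  | left H => exist _ (uclass U M x) (ex_intro _ x (conj H eq_refl))
  | right _ => pbase MU
  end.

Lemma cls_rep x : ubounded M x -> ulim U (fun i => pdist (M i) (x i) (rep (cls x) i)) 0.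
Proof.
  intro Hx. apply (rep_class x Hx). unfold cls.
  destruct (excluded_middle_informative (ubounded M x)). reflexivity. contradiction.
Qed.

End UProd.

Lemma ulim_le2 {I} (U : ultrafilter I) a b la lb : ulim U a la -> ulim U b lb -> U (fun i => a i <= b i) -> la <= lb.
Proof.
  intros Ha Hb H. apply Rnot_lt_le. intro Hl.
  assert (He : 0 < (la - lb) / 2) by lra.
  destruct (uf_nonempty U _ (uf_and U _ _ (uf_and U _ _ (Ha _ He) (Hb _ He)) H)) as [i [[A B] C]].
  apply Rabs_lt_inv in A. apply Rabs_lt_inv in B. lra.
Qed.

Lemma ulim_abs_le {I} (U : ultrafilter I) a b la lb : ulim U a la -> ulim U b lb -> U (fun i => Rabs (a i) <= b i) -> Rabs la <= lb.
Proof.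
  intros Ha Hb H. apply Rabs_le_intro.
  - assert (- la <= lb); [|lra]. apply (ulim_le2 U (fun i => -1 * a i) b). 
    replace (- la) with (-1 * la) by ring. now apply ulim_scal. auto.
    apply (uf_imp U _ _ H). intros i Hi. apply Rabs_le_inv in Hi. lra.
  - apply (ulim_le2 U a b); auto. apply (uf_imp U _ _ H). intros i Hi. apply Rabs_le_inv in Hi. lra.
Qed.

Lemma ulim_abs_ge {I} (U : ultrafilter I) a la c : ulim U a la -> U (fun i => c < Rabs (a i)) -> c <= Rabs la.
Proof.
  intros Ha H. apply Rnot_lt_le. intro Hl.
  destruct (uf_nonempty U _ (uf_and U _ _ (Ha (c - Rabs la) ltac:(lra)) H)) as [i [A B]].
  pose proof (Rabs_triang (a i - la) la). replace (a i - la + la) with (a i) in H0 by ring. lra.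
Qed.

Lemma molf_ext_in {X} (l : list (R * X)) h1 h2 : (forall p, In p l -> h1 (snd p) = h2 (snd p)) -> molf l h1 = molf l h2.
Proof.
  induction l as [|p l IH]; intro H; simpl; auto. rewrite H by now left. rewrite IH; auto.
  intros; apply H; now right.
Qed.

Section Iso.
Context {I : Type} (U : ultrafilter I) (M : I -> pmetric).
Notation MU := (ultraproduct U M).

Definition moli (l : list (R * MU)) (i : I) : functional (M i) :=
  molecule (M i) (map (fun p => (fst p, rep U M (snd p) i)) l).

Lemma moli_eval l i g : moli l i g = molf l (fun P => g (rep U M P i)).
Proof. unfold moli. rewrite molecule_molf. exact (molf_map (fun P : MU => rep U M P i) l g). Qed.

Lemma wsum_rep_bnd (l : list (R * MU)) :
  exists K, forall i, wsum l (fun P => pdist (M i) (rep U M P i) (pbase (M i))) <= K.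
Proof.
  induction l as [|p l [K HK]]; simpl.
  - exists 0; intros; lra.
  - destruct (rep_bnd U M (snd p)) as [C HC]. exists (Rabs (fst p) * C + K). intro i.
    apply Rplus_le_compat; auto. apply Rmult_le_compat_l. apply Rabs_pos. auto.
Qed.

Lemma moli_nb_i l i : nb (M i) (moli l i) (wsum l (fun P => pdist (M i) (rep U M P i) (pbase (M i)))).
Proof.
  intros g Hg. rewrite moli_eval. apply molf_abs. intros p _. apply lip_ball_abs; auto.
Qed.

Lemma moli_nb l : exists K, forall i, nb (M i) (moli l i) K.
Proof.
  destruct (wsum_rep_bnd l) as [K HK]. exists K. intros i g Hg.
  eapply Rle_trans. apply moli_nb_i; auto. auto.
Qed.

Lemma MU_nn : forall x y : MU, 0 <= pdist MU x y.
Proof. apply pdU_nonneg. Qed.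

Lemma molU_nb l : exists C, nb MU (molecule MU l) C.
Proof. eexists. apply mol_nb. Qed.

Lemma Mi_nn i : forall x y : M i, 0 <= pdist (M i) x y.
Proof. apply pm_nonneg. Qed.

Lemma iso_upper l eps : 0 < eps ->
  U (fun i => fnorm (M i) (moli l i) < fnorm MU (molecule MU l) + eps).
Proof.
  intro He. set (N := fnorm MU (molecule MU l)).
  destruct (uf_ultra _ U (fun i => fnorm (M i) (moli l i) < N + eps)) as [H|G]; [exact H|].
  exfalso.
  set (g := fun i => epsilon (inhabits (fun _ : M i => 0))
     (fun g => lip_ball (M i) g /\ (~ fnorm (M i) (moli l i) < N + eps -> N + eps/2 < Rabs (moli l i g)))).
  assert (gspec : forall i, lip_ball (M i) (g i) /\ (~ fnorm (M i) (moli l i) < N + eps -> N + eps/2 < Rabs (moli l i (g i)))).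
  { intro i. unfold g. apply epsilon_spec.
    destruct (classic (fnorm (M i) (moli l i) < N + eps)) as [Hc|Hc].
    - exists (fun _ => 0). split. apply zero_ball. apply Mi_nn. tauto.
    - destruct (moli_nb l) as [K HK].
      destruct (fnorm_approx (M i) (Mi_nn i) (moli l i) (eps/2) (ex_intro _ K (HK i)) ltac:(lra)) as [f [Hf1 Hf2]].
      exists f. split; auto. intros _. lra. }
  set (w := fun P : MU => ulimit U (fun i => g i (rep U M P i))).
  assert (wlim : forall P, ulim U (fun i => g i (rep U M P i)) (w P)).
  { intro P. apply ulimit_spec. destruct (rep_bnd U M P) as [C HC]. exists C. intro i.
    eapply Rle_trans. apply lip_ball_abs. apply gspec. auto. }
  assert (wlip : forall P Q, Rabs (w P - w Q) <= pdist MU P Q).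
  { intros P Q. eapply ulim_abs_le. 2: apply pdU_lim.
    apply ulim_plus. apply wlim. replace (- w Q) with (-1 * w Q) by ring. apply ulim_scal. apply wlim.
    apply uf_all. intro i. replace (g i (rep U M P i) + -1 * g i (rep U M Q i)) with (g i (rep U M P i) - g i (rep U M Q i)) by ring.
    apply gspec. }
  assert (wbase : forall P, Rabs (w P) <= pdist MU (pbase MU) P).
  { intros P. eapply ulim_abs_le. apply wlim. apply pdU_base.
    apply uf_all. intro i. rewrite pm_sym. apply lip_ball_abs. apply gspec. }
  set (pts := map snd l).
  set (f := mcs MU (fun P => P) w pts).
  assert (Hsym := pdU_sym U M). assert (Htri := pdU_tri U M). assert (Hrefl := pdU_refl U M).
  assert (fball : lip_ball MU f).
  { split.
    - apply Rle_antisym. apply mcs_base_upper; auto.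
      apply mcs_lower; auto. intros P _. pose proof (wbase P). rewrite Hsym in H.
      apply Rabs_le_inv in H. lra. rewrite Hrefl; lra.
    - intros x y. apply mcs_lip; auto. }
  assert (fat : forall P, In P pts -> f P = w P).
  { intros P HP. apply Rle_antisym. apply (mcs_upper MU Hrefl (fun P => P)); auto.
    apply mcs_lower; auto. intros Q _. pose proof (wlip P Q). apply Rabs_le_inv in H. rewrite Hsym. lra.
    pose proof (wbase P). apply Rabs_le_inv in H. lra. }
  assert (E : molecule MU l f = molf l w).
  { rewrite molecule_molf. apply molf_ext_in. intros p Hp. apply fat. unfold pts. now apply in_map. }
  assert (L : ulim U (fun i => moli l i (g i)) (molf l w)).
  { eapply ulim_ext_U. apply (ulim_molf U l (fun i P => g i (rep U M P i))). intros p _. apply wlim.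
    apply uf_all. intro i. now rewrite moli_eval. }
  pose proof (ulim_abs_ge U _ _ _ L (uf_imp U _ _ G (fun i Hi => proj2 (gspec i) Hi))).
  pose proof (fnorm_nb MU MU_nn (molecule MU l) (molU_nb l) f fball). fold N in H0.
  rewrite E in H0. lra.
Qed.

Lemma iso_lower l eps : 0 < eps ->
  U (fun i => fnorm MU (molecule MU l) - eps < fnorm (M i) (moli l i)).
Proof.
  intro He. set (N := fnorm MU (molecule MU l)).
  destruct (fnorm_approx MU MU_nn (molecule MU l) (eps/2) (molU_nb l) ltac:(lra)) as [f [fb Hf]].
  fold N in Hf.
  set (S := wsum l (fun _ => 1)).
  assert (HS : 0 <= S) by (apply wsum_nonneg; intros; lra).
  set (d := eps / (4 * (S + 1))).
  assert (Hd : 0 < d) by (unfold d; apply Rdiv_lt_0_compat; lra).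
  set (pts := map snd l).
  assert (H1 : U (fun i => forall P, In P pts -> forall Q, In Q pts -> pdist MU P Q < pdist (M i) (rep U M P i) (rep U M Q i) + d)).
  { apply uf_list. intros P _. apply uf_list. intros Q _.
    apply (uf_imp U _ _ (ulim_gt U _ _ (pdist MU P Q - d) (pdU_lim U M P Q) ltac:(lra))). intros; lra. }
  assert (H2 : U (fun i => forall P, In P pts -> pdist MU (pbase MU) P < pdist (M i) (pbase (M i)) (rep U M P i) + d)).
  { apply uf_list. intros P _.
    apply (uf_imp U _ _ (ulim_gt U _ _ (pdist MU (pbase MU) P - d) (pdU_base U M P) ltac:(lra))). intros; lra. }
  destruct (moli_nb l) as [K HK].
  apply (uf_imp U _ _ (uf_and U _ _ H1 H2)). intros i [A1 A2].
  set (h := mcs (M i) (fun P => rep U M P i) f pts).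
  set (gg := fun y => h y - h (pbase (M i))).
  assert (Hsym := pm_sym (M i)). assert (Htri := pm_tri (M i)).
  assert (Hrefl : forall x : M i, pdist (M i) x x = 0) by (intro; apply pm_sep; auto).
  assert (fbU : forall P, Rabs (f P) <= pdist MU (pbase MU) P).
  { intro P. rewrite pdU_sym. apply lip_ball_abs; auto. }
  assert (h0 : -d <= h (pbase (M i)) <= 0).
  { split. apply mcs_lower; auto. intros P HP. specialize (A2 P HP). pose proof (fbU P).
    apply Rabs_le_inv in H. rewrite Hsym. lra. rewrite Hrefl. lra.
    apply mcs_base_upper; auto. }
  assert (hQ : forall Q, In Q pts -> f Q - d <= h (rep U M Q i) <= f Q).
  { intros Q HQ. split.
    - apply mcs_lower; auto. intros P HP. specialize (A1 P HP Q HQ).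
      destruct fb as [_ fl]. pose proof (fl Q P). apply Rabs_le_inv in H.
      rewrite (pdU_sym U M Q P) in H. lra.
      specialize (A2 Q HQ). pose proof (fbU Q). apply Rabs_le_inv in H. lra.
    - apply (mcs_upper (M i) Hrefl (fun P => rep U M P i)); auto. }
  assert (gball : lip_ball (M i) gg).
  { split. unfold gg; ring. intros x y. unfold gg.
    replace (h x - h (pbase (M i)) - (h y - h (pbase (M i)))) with (h x - h y) by ring.
    apply mcs_lip; auto. }
  assert (close : Rabs (moli l i gg - molecule MU l f) <= S * (2 * d)).
  { rewrite moli_eval, molecule_molf, molf_sub. unfold S. rewrite <- wsum_const.
    apply molf_abs. intros p Hp. assert (HQ : In (snd p) pts) by (unfold pts; now apply in_map).
    specialize (hQ _ HQ). unfold gg. apply Rabs_le_intro; lra. }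
  assert (Q1 : S * (2 * d) < eps / 2).
  { unfold d. apply (Rmult_lt_reg_r (4 * (S + 1))). lra. field_simplify; lra. }
  pose proof (fnorm_nb (M i) (Mi_nn i) (moli l i) (ex_intro _ K (HK i)) gg gball) as Q2.
  rewrite <- Rabs_Ropp in close. replace (- (moli l i gg - molecule MU l f)) with (molecule MU l f - moli l i gg) in close by ring.
  pose proof (Rabs_triang (molecule MU l f - moli l i gg) (moli l i gg)) as Q3.
  replace (molecule MU l f - moli l i gg + moli l i gg) with (molecule MU l f) in Q3 by ring.
  lra.
Qed.

Lemma iso_mol l : ulim U (fun i => fnorm (M i) (moli l i)) (fnorm MU (molecule MU l)).
Proof.
  intros eps He. apply (uf_imp U _ _ (uf_and U _ _ (iso_upper l eps He) (iso_lower l eps He))).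
  intros i [A B]. apply Rabs_lt_intro; lra.
Qed.

End Iso.

Definition eps_ (n : nat) : R := / (INR n + 1).

Lemma eps_pos n : 0 < eps_ n.
Proof. unfold eps_. apply Rinv_0_lt_compat. pose proof (pos_INR n). lra. Qed.

Lemma eps_anti m n : (m <= n)%nat -> eps_ n <= eps_ m.
Proof.
  intro H. unfold eps_. apply Rinv_le_contravar. pose proof (pos_INR m); lra.
  apply le_INR in H. lra.
Qed.

Lemma eps_0 : eps_ 0 = 1.
Proof. unfold eps_. simpl. rewrite Rplus_0_l. apply Rinv_1. Qed.

Lemma eps_small e : 0 < e -> exists m, eps_ m < e.
Proof.
  intro He. destruct (archimed (/ e)) as [H _].
  exists (Z.to_nat (up (/ e))). unfold eps_.
  assert (Hp : (0 <= up (/ e))%Z).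
  { apply le_IZR. pose proof (Rinv_0_lt_compat e He). lra. }
  rewrite INR_IZR_INZ, Z2Nat.id by exact Hp.
  pose proof (Rinv_0_lt_compat e He).
  rewrite <- (Rinv_inv e) at 2. apply Rinv_lt_contravar. apply Rmult_lt_0_compat; lra. lra.
Qed.

Section Constr.
Context {I : Type} (U : ultrafilter I) (M : I -> pmetric).
Notation MU := (ultraproduct U M).

Definition Lseq (phi : functional MU) (n : nat) : list (R * MU) :=
  epsilon (inhabits nil) (fun l => forall f, lip_ball MU f -> Rabs (phi f - molecule MU l f) <= eps_ n).

Lemma Lspec phi : in_free MU phi -> forall n f, lip_ball MU f -> Rabs (phi f - molecule MU (Lseq phi n) f) <= eps_ n.
Proof.
  intros [_ [_ A]] n. unfold Lseq. apply epsilon_spec. apply A. apply eps_pos.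
Qed.

Definition Ediff phi m k i : Prop :=
  fnorm (M i) (moli U M (Lseq phi m ++ negl (Lseq phi k)) i) < 2 * (eps_ m + eps_ k).

Definition Bset phi n i : Prop := forall m k, (m <= n)%nat -> (k <= n)%nat -> Ediff phi m k i.

Lemma moli_app_neg l1 l2 i g : moli U M (l1 ++ negl l2) i g = moli U M l1 i g - moli U M l2 i g.
Proof. rewrite !moli_eval, molf_app, molf_neg. ring. Qed.

Lemma molU_app_neg (l1 l2 : list (R * MU)) g : molecule MU (l1 ++ negl l2) g = molecule MU l1 g - molecule MU l2 g.
Proof. rewrite !molecule_molf, molf_app, molf_neg. ring. Qed.

Lemma Ediff_use phi m k i : Ediff phi m k i -> forall g, lip_ball (M i) g ->
  Rabs (moli U M (Lseq phi m) i g - moli U M (Lseq phi k) i g) <= 2 * (eps_ m + eps_ k).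
Proof.
  intros H g Hg. rewrite <- moli_app_neg. destruct (moli_nb U M (Lseq phi m ++ negl (Lseq phi k))) as [K HK].
  pose proof (fnorm_nb (M i) (Mi_nn M i) _ (ex_intro _ K (HK i)) g Hg). unfold Ediff in H. lra.
Qed.

Section Phi.
Variable phi : functional MU.
Hypothesis Hphi : in_free MU phi.

Lemma Ediff_U m k : U (Ediff phi m k).
Proof.
  unfold Ediff. apply (ulim_lt U _ _ _ (iso_mol U M _)).
  assert (fnorm MU (molecule MU (Lseq phi m ++ negl (Lseq phi k))) <= eps_ m + eps_ k).
  { apply fnorm_le. apply MU_nn. intros f Hf. rewrite molU_app_neg.
    pose proof (Lspec phi Hphi m f Hf). pose proof (Lspec phi Hphi k f Hf).
    apply Rabs_le_inv in H. apply Rabs_le_inv in H0. apply Rabs_le_intro; lra. }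
  pose proof (eps_pos m). pose proof (eps_pos k). lra.
Qed.

Lemma Bset_U n : U (Bset phi n).
Proof.
  unfold Bset. apply (uf_imp U (fun i => forall m, (m <= n)%nat -> forall k, (k <= n)%nat -> Ediff phi m k i)).
  apply (uf_nat U n (fun m i => forall k, (k <= n)%nat -> Ediff phi m k i)). intros m Hm.
  apply (uf_nat U n (fun k i => Ediff phi m k i)). intros; apply Ediff_U.
  intros i H m k Hm Hk. auto.
Qed.

End Phi.

Lemma Bset_mono phi n n' i : (n <= n')%nat -> Bset phi n' i -> Bset phi n i.
Proof. intros H HB m k Hm Hk. apply HB; lia. Qed.

Definition Nidx phi i : nat :=
  epsilon (inhabits 0%nat) (fun n => (Bset phi n i /\ ~ Bset phi (S n) i) \/ (~ Bset phi 0 i /\ n = 0%nat)).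

Definition Tfun (phi : functional MU) (i : I) : functional (M i) :=
  if excluded_middle_informative (forall n, Bset phi n i)
  then (fun f => seqlim (fun n => moli U M (Lseq phi n) i f))
  else moli U M (Lseq phi (Nidx phi i)) i.

Lemma Nidx_spec phi i : ~ (forall n, Bset phi n i) ->
  (Bset phi (Nidx phi i) i /\ ~ Bset phi (S (Nidx phi i)) i) \/ (~ Bset phi 0 i /\ Nidx phi i = 0%nat).
Proof.
  intro H. unfold Nidx. apply epsilon_spec.
  destruct (classic (Bset phi 0 i)) as [H0|H0]; [|exists 0%nat; right; auto].
  apply not_all_ex_not in H. destruct H as [m Hm].
  assert (forall m, ~ Bset phi m i -> exists n, Bset phi n i /\ ~ Bset phi (S n) i).
  { induction m0 as [|m0 IH]; intro Hn. contradiction.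
    destruct (classic (Bset phi m0 i)). exists m0; auto. auto. }
  destruct (H m Hm) as [n Hn]. exists n. now left.
Qed.

Section Phi2.
Variable phi : functional MU.
Hypothesis Hphi : in_free MU phi.

Lemma Tfun_free i : in_free (M i) (Tfun phi i) /\
  (forall m, Bset phi m i -> forall g, lip_ball (M i) g -> Rabs (Tfun phi i g - moli U M (Lseq phi m) i g) <= 4 * eps_ m).
Proof.
  unfold Tfun. destruct (excluded_middle_informative (forall n, Bset phi n i)) as [HB|HB].
  - assert (C := complete_free (M i) (Mi_nn M i) (fun n => moli U M (Lseq phi n) i) (fun m => 4 * eps_ m)).
    destruct C as [C1 C2].
    + intro n. apply in_free_mol.
    + intros e He. destruct (eps_small (e/4)) as [m Hm]. lra. exists m. lra.
    + intros m n Hmn g Hg. eapply Rle_trans. apply Ediff_use. apply (HB n); lia. auto.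
      pose proof (eps_anti _ _ Hmn). lra.
    + split; auto.
  - split. apply in_free_mol.
    intros m Hm g Hg. destruct (Nidx_spec phi i HB) as [[H1 H2]|[H1 H2]].
    + assert (Hmn : (m <= Nidx phi i)%nat).
      { destruct (le_lt_dec m (Nidx phi i)); auto. exfalso. apply H2. apply (Bset_mono phi _ m); auto. }
      eapply Rle_trans. apply Ediff_use. apply H1; auto. auto.
      pose proof (eps_anti _ _ Hmn). lra.
    + exfalso. apply H1. apply (Bset_mono phi _ m); auto. lia.
Qed.

Lemma Tfun_bnd : exists C, forall i, nb (M i) (Tfun phi i) C.
Proof.
  destruct (moli_nb U M (Lseq phi 0)) as [K HK]. exists (K + 4). intros i g Hg.
  destruct (classic (Bset phi 0 i)) as [H0|H0].
  - pose proof (proj2 (Tfun_free i) 0%nat H0 g Hg). rewrite eps_0 in H.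
    pose proof (HK i g Hg). apply Rabs_le_inv in H. apply Rabs_le_inv in H1. apply Rabs_le_intro; lra.
  - unfold Tfun. destruct (excluded_middle_informative (forall n, Bset phi n i)) as [HB|HB].
    + exfalso; auto.
    + destruct (Nidx_spec phi i HB) as [[H1 H2]|[H1 H2]].
      * exfalso. apply H0. apply (Bset_mono phi _ _ _ (Nat.le_0_l _) H1).
      * rewrite H2. pose proof (HK i g Hg). lra.
Qed.

End Phi2.

Definition Tmap (phi : functional MU) : ffam M :=
  if excluded_middle_informative (in_free MU phi) then Tfun phi else (fun i f => 0).

End Constr.

Section Gen.
Context (M : pointed_space) (Hnn : forall x y : M, 0 <= pdist M x y).

Lemma nb_sub phi psi C1 C2 : nb M phi C1 -> nb M psi C2 -> nb M (fun f => phi f - psi f) (C1 + C2).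
Proof.
  intros H1 H2 f Hf. specialize (H1 f Hf). specialize (H2 f Hf).
  apply Rabs_le_inv in H1. apply Rabs_le_inv in H2. apply Rabs_le_intro; lra.
Qed.

Lemma fnorm_sub_use phi psi : (exists C, nb M phi C) -> (exists C, nb M psi C) ->
  forall g, lip_ball M g -> Rabs (phi g - psi g) <= fnorm M (fun f => phi f - psi f).
Proof.
  intros [C1 H1] [C2 H2] g Hg. apply (fnorm_nb M Hnn (fun f => phi f - psi f)); auto.
  exists (C1 + C2). now apply nb_sub.
Qed.

Lemma fnorm_close phi psi c : (exists C, nb M phi C) -> (exists C, nb M psi C) ->
  (forall g, lip_ball M g -> Rabs (phi g - psi g) <= c) -> Rabs (fnorm M phi - fnorm M psi) <= c.
Proof.
  intros H1 H2 H. apply Rabs_le_intro.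
  - assert (fnorm M psi <= fnorm M phi + c); [|lra]. apply (fnorm_le M Hnn). intros g Hg.
    pose proof (H g Hg). pose proof (fnorm_nb M Hnn phi H1 g Hg).
    apply Rabs_le_inv in H0. apply Rabs_le_inv in H3. apply Rabs_le_intro; lra.
  - assert (fnorm M phi <= fnorm M psi + c); [|lra]. apply (fnorm_le M Hnn). intros g Hg.
    pose proof (H g Hg). pose proof (fnorm_nb M Hnn psi H2 g Hg).
    apply Rabs_le_inv in H0. apply Rabs_le_inv in H3. apply Rabs_le_intro; lra.
Qed.

End Gen.

Lemma le_eps x y : (forall d, 0 < d -> x <= y + d) -> x <= y.
Proof. intro H. apply Rnot_lt_le. intro Hl. specialize (H ((x - y)/2) ltac:(lra)). lra. Qed.

Section Main.
Context {I : Type} (U : ultrafilter I) (M : I -> pmetric).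
Notation MU := (ultraproduct U M).

Lemma Tmap_eq phi : in_free MU phi -> Tmap U M phi = Tfun U M phi.
Proof. intro H. unfold Tmap. destruct (excluded_middle_informative (in_free MU phi)); tauto. Qed.

Definition lift (l : list (R * MU)) : list (R * ufam M) := map (fun p => (fst p, rep U M (snd p))) l.

Lemma dc_lift l : delta_comb M (lift l) = moli U M l.
Proof.
  apply functional_extensionality_dep. intro i. unfold delta_comb, lift, moli. now rewrite map_map.
Qed.

Lemma lift_bnd l : Forall (fun p => ubounded M (snd p)) (lift l).
Proof.
  apply Forall_forall. intros x Hx. unfold lift in Hx. apply in_map_iff in Hx.
  destruct Hx as [p [<- _]]. apply rep_bounded.
Qed.

Lemma dc_nb l : Forall (fun p => ubounded M (snd p)) l -> exists K, forall i, nb (M i) (delta_comb M l i) K.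
Proof.
  induction l as [|p l IH]; intro HF.
  - exists 0. intros i f _. unfold delta_comb. simpl. rewrite Rabs_R0. lra.
  - inversion HF as [|? ? Hp Hl]; subst. destruct (IH Hl) as [K HK]. destruct Hp as [C HC].
    exists (Rabs (fst p) * C + K). intros i f Hf.
    change (delta_comb M (p :: l) i f) with (fst p * f (snd p i) + delta_comb M l i f).
    eapply Rle_trans. apply Rabs_triang. rewrite Rabs_mult. apply Rplus_le_compat.
    apply Rmult_le_compat_l. apply Rabs_pos. eapply Rle_trans. apply lip_ball_abs. exact Hf. auto.
    now apply HK.
Qed.

Lemma Tfun_nb_i phi i : in_free MU phi -> exists C, nb (M i) (Tfun U M phi i) C.
Proof. intro H. destruct (Tfun_bnd U M phi) as [C HC]. exists C. auto. Qed.

Lemma moli_nb_i' l i : exists C, nb (M i) (moli U M l i) C.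
Proof. destruct (moli_nb U M l) as [C HC]. exists C. auto. Qed.

Lemma part1 phi : in_free MU phi -> in_delta_span_closure U M (Tmap U M phi).
Proof.
  intro Hphi. rewrite (Tmap_eq phi Hphi). destruct (Tfun_bnd U M phi) as [C HC].
  split.
  - split. intro i. apply (Tfun_free U M phi i).
    exists C. intro i. apply fnorm_le; [apply Mi_nn|]. auto.
  - intros eps He. destruct (eps_small (eps/4)) as [m Hm]. lra.
    exists (lift (Lseq U M phi m)). split. apply lift_bnd.
    unfold unorm, ffam_sub. rewrite dc_lift.
    destruct (moli_nb U M (Lseq U M phi m)) as [K HK].
    set (a := fun i => fnorm (M i) (fun f => Tfun U M phi i f - moli U M (Lseq U M phi m) i f)).
    assert (Ha : forall i, 0 <= a i <= C + K).
    { intro i. unfold a. split. apply fnorm_pos. apply Mi_nn. exists (C + K). apply nb_sub; auto.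
      apply fnorm_le; [apply Mi_nn|]. apply nb_sub; auto. }
    assert (L : ulim U a (ulimit U a)).
    { apply ulimit_spec. exists (C + K). intro i. specialize (Ha i). rewrite Rabs_pos_eq; lra. }
    apply (ulim_le_const U a _ eps L). apply (uf_imp U _ _ (Bset_U U M phi Hphi m)).
    intros i Hi. unfold a. apply fnorm_le; [apply Mi_nn|]. intros g Hg.
    pose proof (proj2 (Tfun_free U M phi i) m Hi g Hg). lra.
Qed.

Lemma part3 phi : in_free MU phi -> unorm U M (Tmap U M phi) = fnorm MU phi.
Proof.
  intro Hphi. rewrite (Tmap_eq phi Hphi). unfold unorm. apply ulimit_eq.
  intros eps He. destruct (eps_small (eps/16)) as [m Hm]. lra.
  pose proof (eps_pos m).
  set (Lm := Lseq U M phi m).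
  assert (A1 : Rabs (fnorm MU (molecule MU Lm) - fnorm MU phi) <= eps_ m).
  { rewrite Rabs_minus_sym. apply fnorm_close. apply MU_nn. apply in_free_nb; auto. apply molU_nb.
    intros g Hg. apply (Lspec U M phi Hphi m g Hg). }
  apply (uf_imp U _ _ (uf_and U _ _ (Bset_U U M phi Hphi m) (iso_mol U M Lm (eps/2) ltac:(lra)))).
  intros i [HB HI].
  assert (A2 : Rabs (fnorm (M i) (Tfun U M phi i) - fnorm (M i) (moli U M Lm i)) <= 4 * eps_ m).
  { apply fnorm_close. apply Mi_nn. apply Tfun_nb_i; auto. apply moli_nb_i'.
    intros g Hg. apply (proj2 (Tfun_free U M phi i) m HB g Hg). }
  apply Rabs_lt_inv in HI. apply Rabs_le_inv in A1. apply Rabs_le_inv in A2.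
  apply Rabs_lt_intro; lra.
Qed.

Lemma part2 phi psi a b : in_free MU phi -> in_free MU psi ->
  unorm U M (ffam_sub M (Tmap U M (fun f => a * phi f + b * psi f))
                        (fun i f => a * Tmap U M phi i f + b * Tmap U M psi i f)) = 0.
Proof.
  intros Hphi Hpsi.
  set (chi := fun f => a * phi f + b * psi f).
  assert (Hchi : in_free MU chi) by (apply in_free_lin; auto).
  rewrite (Tmap_eq chi Hchi), (Tmap_eq phi Hphi), (Tmap_eq psi Hpsi).
  unfold unorm, ffam_sub. apply ulimit_eq. apply ulim_zero. intros eps He.
  set (A := 1 + Rabs a + Rabs b).
  assert (HA : 1 <= A) by (unfold A; pose proof (Rabs_pos a); pose proof (Rabs_pos b); lra).
  destruct (eps_small (eps / (6 * A))) as [m Hm]. apply Rdiv_lt_0_compat; lra.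
  pose proof (eps_pos m).
  assert (Hm' : 6 * A * eps_ m < eps).
  { apply (Rmult_lt_compat_l (6 * A)) in Hm; [|lra]. replace (6 * A * (eps / (6 * A))) with eps in Hm by (field; lra). lra. }
  set (Lc := Lseq U M chi m ++ negl (scall a (Lseq U M phi m) ++ scall b (Lseq U M psi m))).
  assert (G0 : fnorm MU (molecule MU Lc) <= A * eps_ m).
  { apply fnorm_le; [apply MU_nn|]. intros f Hf. unfold Lc. rewrite molU_app_neg, (molecule_molf MU (scall a _ ++ _)), molf_app, !molf_scal, <- !molecule_molf.
    pose proof (Lspec U M chi Hchi m f Hf). pose proof (Lspec U M phi Hphi m f Hf). pose proof (Lspec U M psi Hpsi m f Hf).
    change (chi f) with (a * phi f + b * psi f) in H0.
    replace (molecule MU (Lseq U M chi m) f - (a * molecule MU (Lseq U M phi m) f + b * molecule MU (Lseq U M psi m) f))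
      with (- (a * phi f + b * psi f - molecule MU (Lseq U M chi m) f) + a * (phi f - molecule MU (Lseq U M phi m) f) + b * (psi f - molecule MU (Lseq U M psi m) f)) by ring.
    eapply Rle_trans. apply Rabs_triang. eapply Rle_trans. apply Rplus_le_compat_r. apply Rabs_triang.
    rewrite Rabs_Ropp, !Rabs_mult. unfold A.
    assert (Rabs a * Rabs (phi f - molecule MU (Lseq U M phi m) f) <= Rabs a * eps_ m) by (apply Rmult_le_compat_l; auto using Rabs_pos).
    assert (Rabs b * Rabs (psi f - molecule MU (Lseq U M psi m) f) <= Rabs b * eps_ m) by (apply Rmult_le_compat_l; auto using Rabs_pos).
    lra. }
  assert (G : U (fun i => fnorm (M i) (moli U M Lc i) < A * eps_ m + eps_ m)).
  { apply (ulim_lt U _ _ _ (iso_mol U M Lc)). lra. }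
  apply (uf_imp U _ _ (uf_and U _ _ (uf_and U _ _ (Bset_U U M chi Hchi m) (Bset_U U M phi Hphi m))
                                   (uf_and U _ _ (Bset_U U M psi Hpsi m) G))).
  intros i [[B1 B2] [B3 G1]].
  destruct (Tfun_bnd U M chi) as [C1 HC1]. destruct (Tfun_bnd U M phi) as [C2 HC2].
  destruct (Tfun_bnd U M psi) as [C3 HC3].
  assert (Hnb : nb (M i) (fun f => Tfun U M chi i f - (a * Tfun U M phi i f + b * Tfun U M psi i f)) (C1 + (Rabs a * C2 + Rabs b * C3))).
  { apply nb_sub. auto. intros g Hg. eapply Rle_trans. apply Rabs_triang. rewrite !Rabs_mult.
    apply Rplus_le_compat; apply Rmult_le_compat_l; auto using Rabs_pos; [apply (HC2 i)|apply (HC3 i)]; auto. }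
  rewrite Rabs_pos_eq by (apply fnorm_pos; [apply Mi_nn| eexists; exact Hnb]).
  apply fnorm_le; [apply Mi_nn|]. intros g Hg.
  pose proof (proj2 (Tfun_free U M chi i) m B1 g Hg) as T1.
  pose proof (proj2 (Tfun_free U M phi i) m B2 g Hg) as T2.
  pose proof (proj2 (Tfun_free U M psi i) m B3 g Hg) as T3.
  assert (T4 : Rabs (moli U M Lc i g) <= A * eps_ m + eps_ m).
  { destruct (moli_nb U M Lc) as [K HK].
    pose proof (fnorm_nb (M i) (Mi_nn M i) (moli U M Lc i) (ex_intro _ K (HK i)) g Hg). lra. }
  unfold Lc in T4. rewrite moli_app_neg, (moli_eval U M (scall a _ ++ _)), molf_app, !molf_scal, <- !moli_eval in T4.
  set (x1 := Tfun U M chi i g) in *. set (x2 := Tfun U M phi i g) in *. set (x3 := Tfun U M psi i g) in *.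
  set (y1 := moli U M (Lseq U M chi m) i g) in *. set (y2 := moli U M (Lseq U M phi m) i g) in *.
  set (y3 := moli U M (Lseq U M psi m) i g) in *.
  replace (x1 - (a * x2 + b * x3)) with ((x1 - y1) - a * (x2 - y2) - b * (x3 - y3) + (y1 - (a * y2 + b * y3))) by ring.
  assert (E2 : Rabs (a * (x2 - y2)) <= Rabs a * (4 * eps_ m)) by (rewrite Rabs_mult; apply Rmult_le_compat_l; auto using Rabs_pos).
  assert (E3 : Rabs (b * (x3 - y3)) <= Rabs b * (4 * eps_ m)) by (rewrite Rabs_mult; apply Rmult_le_compat_l; auto using Rabs_pos).
  apply Rabs_le_inv in T1. apply Rabs_le_inv in E2. apply Rabs_le_inv in E3. apply Rabs_le_inv in T4.
  apply Rabs_le_intro; unfold A in *; nra.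
Qed.

End Main.

Section Surj.
Context {I : Type} (U : ultrafilter I) (M : I -> pmetric).
Notation MU := (ultraproduct U M).
Variable nu : ffam M.
Hypothesis Hnu : in_delta_span_closure U M nu.

Definition lseq (m : nat) : list (R * ufam M) :=
  epsilon (inhabits nil) (fun l => Forall (fun p => ubounded M (snd p)) l /\
     unorm U M (ffam_sub M nu (delta_comb M l)) <= eps_ m).

Lemma lspec m : Forall (fun p => ubounded M (snd p)) (lseq m) /\
     unorm U M (ffam_sub M nu (delta_comb M (lseq m))) <= eps_ m.
Proof. unfold lseq. apply epsilon_spec. destruct Hnu as [_ H]. apply H. apply eps_pos. Qed.

Definition Lm (m : nat) : list (R * MU) := map (fun p => (fst p, cls U M (snd p))) (lseq m).

Lemma nu_nb i : exists C, nb (M i) (nu i) C.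
Proof. destruct Hnu as [[H _] _]. apply in_free_nb. apply H. Qed.

Lemma nu_unb : exists C, forall i, nb (M i) (nu i) C.
Proof.
  destruct Hnu as [[H [C HC]] _]. exists C. intros i f Hf.
  eapply Rle_trans. apply fnorm_nb. apply Mi_nn. apply in_free_nb. apply H. exact Hf. apply HC.
Qed.

Lemma dc_nb_i m i : exists C, nb (M i) (delta_comb M (lseq m) i) C.
Proof. destruct (dc_nb M (lseq m) (proj1 (lspec m))) as [K HK]. exists K. auto. Qed.

Lemma F1 m d : 0 < d -> U (fun i => fnorm (M i) (fun f => nu i f - delta_comb M (lseq m) i f) < eps_ m + d).
Proof.
  intro Hd. destruct (lspec m) as [Hb Hu].
  destruct nu_unb as [C HC]. destruct (dc_nb M (lseq m) Hb) as [K HK].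
  set (a := fun i => fnorm (M i) (fun f => nu i f - delta_comb M (lseq m) i f)).
  assert (L : ulim U a (ulimit U a)).
  { apply ulimit_spec. exists (C + K). intro i. unfold a. rewrite Rabs_pos_eq.
    apply fnorm_le. apply Mi_nn. apply nb_sub; auto.
    apply fnorm_pos. apply Mi_nn. exists (C + K). apply nb_sub; auto. }
  apply (ulim_lt U a _ _ L). unfold unorm, ffam_sub in Hu. fold a in Hu. lra.
Qed.

Lemma dc_eval m i f : delta_comb M (lseq m) i f = molf (lseq m) (fun x => f (x i)).
Proof. unfold delta_comb. rewrite molecule_molf. exact (molf_map (fun x : ufam M => x i) (lseq m) f). Qed.

Lemma Lm_eval m i f : moli U M (Lm m) i f = molf (lseq m) (fun x => f (rep U M (cls U M x) i)).
Proof. rewrite moli_eval. unfold Lm. exact (molf_map (cls U M) (lseq m) (fun P => f (rep U M P i))). Qed.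

Lemma F2 m : ulim U (fun i => fnorm (M i) (fun f => delta_comb M (lseq m) i f - moli U M (Lm m) i f)) 0.
Proof.
  destruct (lspec m) as [Hb _].
  apply (ulim_squeeze U (fun _ => 0) (fun i => wsum (lseq m) (fun x => pdist (M i) (x i) (rep U M (cls U M x) i)))).
  apply ulim_const.
  apply ulim_wsum0. intros p Hp. apply cls_rep. rewrite Forall_forall in Hb. now apply Hb.
  apply uf_all. intro i. rewrite Rminus_0_r.
  assert (Hnb : nb (M i) (fun f => delta_comb M (lseq m) i f - moli U M (Lm m) i f)
                  (wsum (lseq m) (fun x => pdist (M i) (x i) (rep U M (cls U M x) i)))).
  { intros f Hf. rewrite dc_eval, Lm_eval, molf_sub. apply molf_abs. intros p _. apply Hf. }
  rewrite Rabs_pos_eq. apply fnorm_le; auto. apply Mi_nn.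
  apply fnorm_pos. apply Mi_nn. eexists; exact Hnb.
Qed.

Lemma Lm_cauchy m n f : lip_ball MU f -> Rabs (molecule MU (Lm n) f - molecule MU (Lm m) f) <= eps_ n + eps_ m.
Proof.
  intro Hf. rewrite <- molU_app_neg.
  eapply Rle_trans. apply (fnorm_nb MU (MU_nn U M) _ (molU_nb U M _) f Hf).
  apply le_eps. intros d Hd.
  apply (ulim_le_const U _ _ _ (iso_mol U M _)).
  apply (uf_imp U _ _ (uf_and U _ _ (uf_and U _ _ (F1 n (d/4) ltac:(lra)) (F1 m (d/4) ltac:(lra)))
      (uf_and U _ _ (ulim_lt U _ _ (d/4) (F2 n) ltac:(lra)) (ulim_lt U _ _ (d/4) (F2 m) ltac:(lra))))).
  intros i [[A1 A2] [A3 A4]]. apply fnorm_le. apply Mi_nn. intros g Hg.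
  rewrite moli_app_neg.
  pose proof (fnorm_sub_use (M i) (Mi_nn M i) _ _ (nu_nb i) (dc_nb_i n i) g Hg) as B1.
  pose proof (fnorm_sub_use (M i) (Mi_nn M i) _ _ (nu_nb i) (dc_nb_i m i) g Hg) as B2.
  pose proof (fnorm_sub_use (M i) (Mi_nn M i) _ _ (dc_nb_i n i) (moli_nb_i' U M (Lm n) i) g Hg) as B3.
  pose proof (fnorm_sub_use (M i) (Mi_nn M i) _ _ (dc_nb_i m i) (moli_nb_i' U M (Lm m) i) g Hg) as B4.
  simpl in B1, B2, B3, B4.
  apply Rabs_le_inv in B1. apply Rabs_le_inv in B2. apply Rabs_le_inv in B3. apply Rabs_le_inv in B4.
  apply Rabs_le_intro; lra.
Qed.

Lemma part4 : exists phi, in_free MU phi /\ unorm U M (ffam_sub M nu (Tmap U M phi)) = 0.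
Proof.
  destruct (complete_free MU (MU_nn U M) (fun n => molecule MU (Lm n)) (fun m => 2 * eps_ m)) as [Hphi Happ].
  - intro n. apply in_free_mol.
  - intros e He. destruct (eps_small (e/2)) as [m Hm]. lra. exists m. lra.
  - intros m n Hmn f Hf. eapply Rle_trans. apply Lm_cauchy; auto. pose proof (eps_anti _ _ Hmn). lra.
  - set (phi := fun f => seqlim (fun n => molecule MU (Lm n) f)) in *.
    exists phi. split; auto.
    rewrite (Tmap_eq U M phi Hphi). unfold unorm, ffam_sub. apply ulimit_eq. apply ulim_zero.
    intros eps He. destruct (eps_small (eps/12)) as [m Hm]. lra. pose proof (eps_pos m).
    assert (G0 : fnorm MU (molecule MU (Lm m ++ negl (Lseq U M phi m))) <= 3 * eps_ m).
    { apply fnorm_le. apply MU_nn. intros f Hf. rewrite molU_app_neg.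
      pose proof (Happ m f Hf). pose proof (Lspec U M phi Hphi m f Hf).
      apply Rabs_le_inv in H0. apply Rabs_le_inv in H1. change (seqlim (fun n : nat => molecule MU (Lm n) f)) with (phi f) in H0. apply Rabs_le_intro; lra. }
    apply (uf_imp U _ _ (uf_and U _ _ (uf_and U _ _ (F1 m (eps_ m) H) (ulim_lt U _ _ (eps_ m) (F2 m) H))
       (uf_and U _ _ (Bset_U U M phi Hphi m) (ulim_lt U _ _ (4 * eps_ m) (iso_mol U M (Lm m ++ negl (Lseq U M phi m))) ltac:(lra))))).
    intros i [[A1 A2] [A3 A4]].
    destruct (nu_nb i) as [C1 HC1]. destruct (Tfun_bnd U M phi) as [C2 HC2].
    rewrite Rabs_pos_eq by (apply fnorm_pos; [apply Mi_nn|exists (C1 + C2); apply nb_sub; auto]).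
    apply fnorm_le. apply Mi_nn. intros g Hg.
    pose proof (fnorm_sub_use (M i) (Mi_nn M i) _ _ (nu_nb i) (dc_nb_i m i) g Hg) as B1.
    pose proof (fnorm_sub_use (M i) (Mi_nn M i) _ _ (dc_nb_i m i) (moli_nb_i' U M (Lm m) i) g Hg) as B2.
    assert (B3 : Rabs (moli U M (Lm m ++ negl (Lseq U M phi m)) i g) <= 4 * eps_ m).
    { destruct (moli_nb U M (Lm m ++ negl (Lseq U M phi m))) as [K HK].
      pose proof (fnorm_nb (M i) (Mi_nn M i) _ (ex_intro _ K (HK i)) g Hg). lra. }
    rewrite moli_app_neg in B3.
    pose proof (proj2 (Tfun_free U M phi i) m A3 g Hg) as B4.
    simpl in B1, B2.
    apply Rabs_le_inv in B1. apply Rabs_le_inv in B2. apply Rabs_le_inv in B3. apply Rabs_le_inv in B4.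
    apply Rabs_le_intro; lra.
Qed.

End Surj.

Theorem theorem3p4 (I : Type) (U : ultrafilter I) (M : I -> pmetric) :
  exists T : functional (ultraproduct U M) -> ffam M,
    (forall phi, in_free (ultraproduct U M) phi ->
       in_delta_span_closure U M (T phi)) /\
    (forall phi psi a b,
       in_free (ultraproduct U M) phi -> in_free (ultraproduct U M) psi ->
       unorm U M (ffam_sub M (T (fun f => a * phi f + b * psi f))
                             (fun i f => a * T phi i f + b * T psi i f)) = 0) /\
    (forall phi, in_free (ultraproduct U M) phi ->
       unorm U M (T phi) = fnorm (ultraproduct U M) phi) /\
    (forall nu, in_delta_span_closure U M nu ->
       exists phi, in_free (ultraproduct U M) phi /\
         unorm U M (ffam_sub M nu (T phi)) = 0).
Proof.
  exists (Tmap U M). split; [|split; [|split]].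
  - apply part1.
  - intros. apply part2; auto.
  - apply part3.
  - intros nu Hnu. apply part4. exact Hnu.
Qed.
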